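(* Let $X,Y$ be Banach spaces and $N$ a positively octahedral absolute normalized norm on $\mathbb R^2$, and let $a,b\ge0$ be such that $N(a,b)=1$ and $N((a,b)+(0,1))=N((a,b)+(1,0))=2$. If $x\in S_X$ and $y\in S_Y$ are super Daugavet points, then $(ax,by)$ is a super Daugavet point of $X\oplus_NY$.
   Context: A norm $N$ on $\mathbb R^2$ is absolute if $N(a,b)=N(|a|,|b|)$ and normalized if $N(1,0)=N(0,1)=1$; it is positively octahedral if there exist $a,b\ge0$ with $N(a,b)=1$ and $N((a,b)+(0,1))=N((a,b)+(1,0))=2$. $X\oplus_NY$ is $X\times Y$ with norm $\|(x,y)\|=N(\|x\|,\|y\|)$. An element $x\in S_X$ is a super Daugavet point if $\sup_{z\in V}\|x-z\|=2$ for every non-empty relatively weakly open subset $V$ of $B_X$. *)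

(* Defs.v *)
From mathcomp Require Import all_boot all_order all_algebra.
From mathcomp Require Import all_classical all_reals all_analysis.
Set Implicit Arguments. Unset Strict Implicit. Unset Printing Implicit Defensive.
Import Order.TTheory GRing.Theory Num.Theory.
Local Open Scope ring_scope.
Local Open Scope classical_set_scope.

Definition is_norm_R2 {R : realType} (N : R -> R -> R) : Prop :=
  [/\ (forall s t, N s t = 0 -> s = 0 /\ t = 0),
      (forall c s t, N (c * s) (c * t) = `|c| * N s t) &
      (forall s t u v, N (s + u) (t + v) <= N s t + N u v)].

Definition absolute_norm {R : realType} (N : R -> R -> R) : Prop :=
  is_norm_R2 N /\ forall s t, N s t = N `|s| `|t|.

Definition normalized_norm {R : realType} (N : R -> R -> R) : Prop :=
  N 1 0 = 1 /\ N 0 1 = 1.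

Definition positively_octahedral {R : realType} (N : R -> R -> R) : Prop :=
  exists s t : R, [/\ 0 <= s, 0 <= t, N s t = 1,
                      N s (t + 1) = 2 & N (s + 1) t = 2].

Section GenericNormedSpace.
Context {R : realType} {V : lmodType R}.
Variable nrm : V -> R.

Definition linear_functional (f : V -> R) : Prop :=
  forall (c : R) (u v : V), f (c *: u + v) = c * f u + f v.

Definition dual_elt (f : V -> R) : Prop :=
  linear_functional f /\ exists C : R, forall v, `|f v| <= C * nrm v.

Definition unit_ball : set V := [set v | nrm v <= 1].
Definition unit_sphere : set V := [set v | nrm v = 1].

Definition rel_weakly_open (W : set V) : Prop :=
  W `<=` unit_ball /\
  forall x, W x -> exists (n : nat) (fs : 'I_n -> V -> R) (e : R),
    [/\ 0 < e, (forall i, dual_elt (fs i)) &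
        [set z | unit_ball z /\ forall i, `|fs i (z - x)| < e] `<=` W].

Definition super_daugavet (x : V) : Prop :=
  unit_sphere x /\
  forall W : set V, rel_weakly_open W -> W !=set0 ->
    sup [set nrm (x - z) | z in W] = 2.
End GenericNormedSpace.

Definition sum_norm {R : realType} {X Y : normedModType R}
  (N : R -> R -> R) (p : (X * Y)%type) : R := N `|p.1| `|p.2|.

(* Main.v *)
Require Import Defs.
From mathcomp Require Import all_boot all_order all_algebra.
From mathcomp Require Import all_classical all_reals all_analysis.
From mathcomp Require Import ring lra.
Import Order.TTheory GRing.Theory Num.Theory.
Local Open Scope ring_scope.

Section Aux.
Local Open Scope classical_set_scope.

Definition TRI {R : realType} (N : R -> R -> R) :=
  forall s t u v, N (s + u) (t + v) <= N s t + N u v.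
Definition HOM {R : realType} (N : R -> R -> R) :=
  forall c s t, N (c * s) (c * t) = `|c| * N s t.
Definition ABS {R : realType} (N : R -> R -> R) :=
  forall s t, N s t = N `|s| `|t|.

Lemma Nc0 {R : realType} (N : R -> R -> R) c : HOM N -> N 1 0 = 1 -> N c 0 = `|c|.
Proof. move=> H H1; have := H c 1 0; rewrite mulr1 mulr0 H1 mulr1 //. Qed.

Lemma N0c {R : realType} (N : R -> R -> R) c : HOM N -> N 0 1 = 1 -> N 0 c = `|c|.
Proof. move=> H H1; have := H c 0 1; rewrite mulr1 mulr0 H1 mulr1 //. Qed.

Lemma mono1 {R : realType} (N : R -> R -> R) s1 s2 t :
  TRI N -> HOM N -> ABS N -> 0 <= s1 -> s1 <= s2 -> N s1 t <= N s2 t.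
Proof.
move=> Ht Hh Ha h1 h12.
have [s20|s2n0] := eqVneq s2 0.
  rewrite s20 in h12 *; by have -> : s1 = 0 by apply/eqP; rewrite eq_le h12 h1.
have s2p : 0 < s2 by rewrite lt_neqAle eq_sym s2n0 /=; apply: le_trans h12.
set l := (s2 + s1) / (2 * s2).
have l0 : 0 <= l by rewrite /l divr_ge0 // ?mulr_ge0 //; lra.
have l1 : l <= 1 by rewrite /l ler_pdivrMr ?mulr_gt0 //; lra.
have e1 : s1 = l * s2 + (1 - l) * (- s2) by rewrite /l; field; lra.
have e2 : t = l * t + (1 - l) * t by ring.
have := Ht (l * s2) (l * t) ((1 - l) * (- s2)) ((1 - l) * t).
rewrite -e1 -e2 !Hh (ger0_norm l0) ger0_norm; last by lra.
have -> : N (- s2) t = N s2 t by rewrite Ha normrN -Ha.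
by move=> H; apply: (le_trans H); rewrite -mulrDl addrC subrK mul1r.
Qed.

Lemma mono2 {R : realType} (N : R -> R -> R) s1 s2 t1 t2 :
  TRI N -> HOM N -> ABS N -> 0 <= s1 -> s1 <= s2 -> 0 <= t1 -> t1 <= t2 ->
  N s1 t1 <= N s2 t2.
Proof.
move=> Ht Hh Ha h1 h12 g1 g12.
apply: le_trans (mono1 N s1 s2 t1 Ht Hh Ha h1 h12) _.
have Ht' : TRI (fun s t => N t s) by move=> ? ? ? ?; apply: Ht.
have Hh' : HOM (fun s t => N t s) by move=> ? ? ?; apply: Hh.
have Ha' : ABS (fun s t => N t s) by move=> ? ?; apply: Ha.
exact: (mono1 (fun s t => N t s) t1 t2 s2 Ht' Hh' Ha' g1 g12).
Qed.

Lemma cone_ub {R : realType} (N : R -> R -> R) a b mu nu :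
  TRI N -> HOM N -> N a b = 1 -> N 1 0 = 1 -> 0 <= mu -> 0 <= nu ->
  N (mu * a + nu) (mu * b) <= mu + nu.
Proof.
move=> Ht Hh Hab H10 m0 n0.
have := Ht (mu * a) (mu * b) nu 0; rewrite addr0 Hh Hab (Nc0 N _ Hh H10).
by rewrite !ger0_norm // mulr1.
Qed.

Lemma cone_lb {R : realType} (N : R -> R -> R) a b mu nu :
  TRI N -> HOM N -> N a b = 1 -> N (a + 1) b = 2 -> N 1 0 = 1 ->
  0 <= a -> 0 <= b -> 0 <= mu -> 0 <= nu ->
  mu + nu <= N (mu * a + nu) (mu * b).
Proof.
move=> Ht Hh Hab Ha1 H10 a0 b0 m0 n0.
have [le|lt] := leP nu mu.
  have := Ht (mu * a + nu) (mu * b) (mu - nu) 0.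
  have -> : mu * a + nu + (mu - nu) = mu * (a + 1) by ring.
  rewrite addr0 Hh Ha1 (Nc0 N _ Hh H10) !ger0_norm //; last by lra.
  lra.
have := Ht (mu * a + nu) (mu * b) ((nu - mu) * a) ((nu - mu) * b).
have -> : mu * a + nu + (nu - mu) * a = nu * (a + 1) by ring.
have -> : mu * b + (nu - mu) * b = nu * b by ring.
rewrite !Hh Ha1 Hab !ger0_norm //; lra.
Qed.

Lemma target1 {R : realType} (N : R -> R -> R) a b s t :
  TRI N -> HOM N -> N a b = 1 -> N (a + 1) b = 2 -> N 1 0 = 1 ->
  0 <= a -> 0 <= b -> 0 <= s -> 0 <= t -> N s t <= 1 -> t * a <= s * b ->
  exists s' t', [/\ s <= s', t <= t', N s' t' <= 1 & 2 <= N (a + s') (b + t')].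
Proof.
move=> Ht Hh Hab Ha1 H10 a0 b0 s0 t0 Hst hc.
set al := t / b.
have al0 : 0 <= al by rewrite /al divr_ge0.
have [eal bet] : t = al * b /\ 0 <= s - al * a.
  have [b0'|bn0] := eqVneq b 0.
    move: Hab; rewrite b0' (Nc0 N _ Hh H10) ger0_norm // => a1.
    move: hc; rewrite b0' a1 mulr0 mulr1 => ht.
    have t00 : t = 0 by apply/eqP; rewrite eq_le ht t0.
    by rewrite /al t00 b0' !mul0r; split => //; rewrite subr0.
  have bp : 0 < b by rewrite lt_neqAle eq_sym bn0.
  split; first by rewrite /al mulfVK.
  rewrite /al subr_ge0 mulrAC ler_pdivrMr //; lra.
set be := s - al * a.
have es : s = al * a + be by rewrite /be; ring.
have hab : al + be <= 1.
  apply: le_trans Hst; rewrite es [in X in _ <= N _ X]eal.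
  exact: cone_lb.
exists (al * a + (1 - al)), (al * b); split.
- rewrite es; lra.
- by rewrite eal.
- apply: le_trans (cone_ub _ _ _ _ _ Ht Hh Hab H10 al0 _) _; lra.
- have -> : a + (al * a + (1 - al)) = (1 + al) * a + (1 - al) by ring.
  have -> : b + al * b = (1 + al) * b by ring.
  apply: le_trans (cone_lb _ _ _ _ _ Ht Hh Hab Ha1 H10 a0 b0 _ _) ; lra.
Qed.

Lemma target {R : realType} (N : R -> R -> R) a b s t :
  TRI N -> HOM N -> N a b = 1 -> N (a + 1) b = 2 -> N a (b + 1) = 2 ->
  N 1 0 = 1 -> N 0 1 = 1 ->
  0 <= a -> 0 <= b -> 0 <= s -> 0 <= t -> N s t <= 1 ->
  exists s' t', [/\ s <= s', t <= t', N s' t' <= 1 & 2 <= N (a + s') (b + t')].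
Proof.
move=> Ht Hh Hab Ha1 Hb1 H10 H01 a0 b0 s0 t0 Hst.
have [hc|hc] := leP (t * a) (s * b); first exact: target1.
have Ht' : TRI (fun s t => N t s) by move=> ? ? ? ?; apply: Ht.
have Hh' : HOM (fun s t => N t s) by move=> ? ? ?; apply: Hh.
have [t' [s' [h1 h2 h3 h4]]] :=
  target1 (fun s t => N t s) b a t s Ht' Hh' Hab Hb1 H01 b0 a0 t0 s0 Hst
     (ltW hc).
by exists s', t'; split.
Qed.

Lemma far {R : realType} (X : normedModType R) (x w : X) l m d :
  `|x| = 1 -> `|w| <= 1 -> 2 - d <= `|x - w| -> 0 <= l -> l <= 1 ->
  0 <= m -> m <= 1 -> 0 <= d -> l + m - d <= `|l *: x - m *: w|.
Proof.
move=> nx nw hd l0 l1 m0 m1 d0.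
have nw0 := normr_ge0 w.
have [le|lt] := leP m l.
  have e : l *: (x - w) = (l *: x - m *: w) + (m - l) *: w.
    by rewrite scalerBr scalerBl addrA subrK.
  have := ler_normD (l *: x - m *: w) ((m - l) *: w).
  rewrite -e !normrZ (ger0_norm l0) (ler0_norm (_ : m - l <= 0)); last by lra.
  move=> H.
  have : l * (2 - d) <= l * `|x - w| by rewrite ler_wpM2l.
  have : (l - m) * `|w| <= l - m by rewrite ler_piMr //; lra.
  nra.
have e : m *: (x - w) = (m - l) *: x + (l *: x - m *: w).
  by rewrite scalerBr scalerBl addrA subrK.
have := ler_normD ((m - l) *: x) (l *: x - m *: w).
rewrite -e !normrZ (ger0_norm m0) (ger0_norm (_ : 0 <= m - l)) ?nx; last by lra.
move=> H.
have : m * (2 - d) <= m * `|x - w| by rewrite ler_wpM2l.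
nra.
Qed.

Lemma lin0 {R : realType} {V : lmodType R} (g : V -> R) :
  linear_functional g -> g 0 = 0.
Proof.
move=> Hg; have := Hg 1 0 0; rewrite scaler0 addr0 mul1r => H; lra.
Qed.

Lemma pick {R : realType} (X : normedModType R) (x u : X) (n : nat)
  (g : 'I_n -> X -> R) (sp e d a : R) :
  super_daugavet (fun v : X => `|v|) x ->
  (forall i, dual_elt (fun v : X => `|v|) (g i)) ->
  `|u| <= sp -> sp <= 1 -> 0 < e -> 0 < d -> 0 <= a -> a <= 1 ->
  exists z, [/\ `|z| <= sp, (forall i, `|g i (z - u)| < e) &
                a + sp - d < `|a *: x - z| ].
Proof.
move=> [nx Hsd] Hg hu hs1 e0 d0 a0 a1.
have sp0 : 0 <= sp by apply: le_trans hu.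
pose V := [set w : X | `|w| <= 1 /\ forall i, `|g i (sp *: w - u)| < e].
have lin : forall i c p q, g i (c *: p + q) = c * g i p + g i q.
  by move=> i; case: (Hg i).
have HV : rel_weakly_open (fun v : X => `|v|) V.
  split; first by move=> w [].
  move=> w0 [w01 hw0].
  pose M := \big[Num.max/0]_(i < n) `|g i (sp *: w0 - u)|.
  have hM : M < e by apply: bigmax_lt.
  exists n, (fun i w => sp * g i w), (e - M); split.
  - by rewrite subr_gt0.
  - move=> i; split.
      by move=> c p q; rewrite lin mulrDr mulrCA.
    case: (Hg i) => _ [C HC]; exists (sp * C) => v.
    rewrite normrM ger0_norm // -mulrA ler_wpM2l //.
  - move=> z [z1 hz]; split => // i.
    have -> : sp *: z - u = sp *: (z - w0) + (sp *: w0 - u).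
      by rewrite scalerBr addrA subrK.
    rewrite lin.
    apply: le_lt_trans (ler_normD _ _) _.
    have : `|g i (sp *: w0 - u)| <= M by apply: (le_bigmax _ (fun i => `|g i (sp *: w0 - u)|) i).
    have := hz i.
    lra.
pose w0 := sp^-1 *: u.
have Vw0 : V w0.
  have [sp00|spn0] := eqVneq sp 0.
    have u0 : u = 0 by apply/normr0_eq0/eqP; rewrite eq_le normr_ge0 andbT -sp00.
    rewrite /V /w0 u0 scaler0; split; first by rewrite normr0.
    by move=> i; rewrite scaler0 subrr (lin0 (g i)) ?normr0 //; case: (Hg i).
  split.
    rewrite /w0 normrZ ger0_norm ?invr_ge0 // mulrC ler_pdivrMr ?mul1r //.
    by rewrite lt_neqAle eq_sym spn0.
  by move=> i; rewrite /w0 scalerA mulfV // scale1r subrr (lin0 (g i)) ?normr0 //; case: (Hg i).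
have hsup := Hsd V HV (ex_intro _ w0 Vw0).
have h2 : 2 - d < sup [set `|x - z| | z in V] by rewrite hsup; lra.
have [|y [w Vw <-] hy] := sup_gt _ h2.
  by exists `|x - w0|, w0.
case: Vw => w1 hw.
exists (sp *: w); split => //.
- by rewrite normrZ ger0_norm // -[X in _ <= X]mulr1 ler_wpM2l.
- have hxw : `|x - w| <= 2.
    by apply: le_trans (ler_normB _ _) _; rewrite nx; lra.
  have hd' : 2 - (2 - `|x - w|) <= `|x - w| by lra.
  have hd0 : 0 <= 2 - `|x - w| by lra.
  have := @far _ _ x w a sp (2 - `|x - w|) nx w1 hd' a0 a1 sp0 hs1 hd0.
  lra.
Qed.

End Aux.

Lemma dual_l {R : realType} (X Y : normedModType R) (N : R -> R -> R)
  (f : (X * Y)%type -> R) : HOM N -> N 1 0 = 1 ->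
  dual_elt (sum_norm N : (X * Y)%type -> R) f ->
  dual_elt (fun v : X => `|v|) (fun w => f (w, 0)).
Proof.
move=> Hh H10 [Hl [C HC]]; split.
  move=> c u v /=; rewrite -Hl; congr f.
  by rewrite [RHS]surjective_pairing /= scaler0 addr0.
exists C => v; have := HC (v, 0).
by rewrite /sum_norm /= normr0 (Nc0 N _ Hh H10) normr_id.
Qed.

Lemma dual_r {R : realType} (X Y : normedModType R) (N : R -> R -> R)
  (f : (X * Y)%type -> R) : HOM N -> N 0 1 = 1 ->
  dual_elt (sum_norm N : (X * Y)%type -> R) f ->
  dual_elt (fun v : Y => `|v|) (fun w => f (0, w)).
Proof.
move=> Hh H01 [Hl [C HC]]; split.
  move=> c u v /=; rewrite -Hl; congr f.
  by rewrite [RHS]surjective_pairing /= scaler0 addr0.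
exists C => v; have := HC (0, v).
by rewrite /sum_norm /= normr0 (N0c N _ Hh H01) normr_id.
Qed.

Lemma decomp {R : realType} (X Y : normedModType R)
  (f : (X * Y)%type -> R) (z1 : X) (z2 : Y) :
  linear_functional f -> f (z1, z2) = f (z1, 0) + f (0, z2).
Proof.
move=> Hl; rewrite -[f (z1, 0)]mul1r -Hl; congr f.
by rewrite [RHS]surjective_pairing /= !scale1r addr0 add0r.
Qed.

Theorem mainTheorem7 (R : realType) (X Y : completeNormedModType R)
  (N : R -> R -> R) (a b : R) (x : X) (y : Y) :
  absolute_norm N -> normalized_norm N -> positively_octahedral N ->
  0 <= a -> 0 <= b -> N a b = 1 -> N a (b + 1) = 2 -> N (a + 1) b = 2 ->
  super_daugavet (fun v : X => `|v|) x ->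
  super_daugavet (fun v : Y => `|v|) y ->
  super_daugavet (sum_norm N : (X * Y)%type -> R) (a *: x, b *: y).
Proof.
move=> [[Hdef Hh0 Ht0] Ha0] [H10 H01] _ a0 b0 Hab Hb1 Ha1 sdx sdy.
have Ht : TRI N := Ht0. have Hh : HOM N := Hh0. have Ha : ABS N := Ha0.
have nx : `|x| = 1 := sdx.1. have ny : `|y| = 1 := sdy.1.
have a1 : a <= 1.
  have := mono2 N a a 0 b Ht Hh Ha a0 (le_refl a) (le_refl 0) b0.
  by rewrite Hab (Nc0 N _ Hh H10) ger0_norm.
have b1 : b <= 1.
  have := mono2 N 0 a b b Ht Hh Ha (le_refl 0) a0 b0 (le_refl b).
  by rewrite Hab (N0c N _ Hh H01) ger0_norm.
split.
  by rewrite /unit_sphere /sum_norm /= !normrZ nx ny !mulr1 !ger0_norm.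
move=> W [HWb HWo] [p Wp].
set p0 := (a *: x, b *: y).
have ub : forall z, W z -> sum_norm N (p0 - z) <= 2.
  move=> z Wz; have := HWb z Wz; rewrite /unit_ball /sum_norm /= => hz.
  apply: le_trans (_ : N (a + `|z.1|) (b + `|z.2|) <= 2).
    apply: mono2 => //.
      by apply: le_trans (ler_normB _ _) _; rewrite normrZ nx mulr1 ger0_norm.
    by apply: le_trans (ler_normB _ _) _; rewrite normrZ ny mulr1 ger0_norm.
  apply: le_trans (Ht _ _ _ _) _; rewrite Hab; lra.
have key : forall d, 0 < d -> exists z, W z /\ 2 - 2 * d <= sum_norm N (p0 - z).
  move=> d d0.
  move: Wp; case: p => u v Wp.
  have [n [fs [e [e0 Hfs Hsub]]]] := HWo _ Wp.
  have hst : N `|u| `|v| <= 1 := HWb _ Wp.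
  have [s' [t' [hs ht hst' h2]]] := target N a b `|u| `|v| Ht Hh Hab Ha1 Hb1 H10 H01
     a0 b0 (normr_ge0 _) (normr_ge0 _) hst.
  have s0 : 0 <= s' by apply: le_trans hs.
  have t0 : 0 <= t' by apply: le_trans ht.
  have s1 : s' <= 1.
    have := mono2 N s' s' 0 t' Ht Hh Ha s0 (le_refl _) (le_refl 0) t0.
    rewrite (Nc0 N _ Hh H10) ger0_norm // => H; exact: le_trans hst'.
  have t1 : t' <= 1.
    have := mono2 N 0 s' t' t' Ht Hh Ha (le_refl 0) s0 t0 (le_refl _).
    rewrite (N0c N _ Hh H01) ger0_norm // => H; exact: le_trans hst'.
  have e2 : 0 < e / 2 by rewrite divr_gt0.
  have [z1 [hz1 hg hx]] := @pick _ _ x u n (fun i w => fs i (w, 0)) s' (e / 2) d a sdx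
     (fun i => @dual_l _ _ _ _ _ Hh H10 (Hfs i)) hs s1 e2 d0 a0 a1.
  have [z2 [hz2 hh hy]] := @pick _ _ y v n (fun i w => fs i (0, w)) t' (e / 2) d b sdy
     (fun i => @dual_r _ _ _ _ _ Hh H01 (Hfs i)) ht t1 e2 d0 b0 b1.
  exists (z1, z2); split.
    apply: Hsub; split.
      rewrite /unit_ball /sum_norm /=.
      apply: le_trans hst'; apply: mono2 => //.
    move=> i; have -> : (z1, z2) - (u, v) = (z1 - u, z2 - v) by [].
    rewrite (@decomp _ _ _ _ _ _ (proj1 (Hfs i))).
    apply: le_lt_trans (ler_normD _ _) _.
    have := hg i; have := hh i; lra.
  rewrite /sum_norm /=.
  set A := `|a *: x - z1|; set B := `|b *: y - z2|.
  have hA : A <= a + s'.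
    by apply: le_trans (ler_normB _ _) _; rewrite normrZ nx mulr1 ger0_norm // lerD2l.
  have hB : B <= b + t'.
    by apply: le_trans (ler_normB _ _) _; rewrite normrZ ny mulr1 ger0_norm // lerD2l.
  have := Ht A B (a + s' - A) (b + t' - B).
  have -> : A + (a + s' - A) = a + s' by ring.
  have -> : B + (b + t' - B) = b + t' by ring.
  have := Ht (a + s' - A) 0 0 (b + t' - B).
  rewrite addr0 add0r (Nc0 N _ Hh H10) (N0c N _ Hh H01) !ger0_norm; try lra.
  have hxA : a + s' - d < A := hx. have hyB : b + t' - d < B := hy.
  move=> H1 H2; lra.
have h2S : has_sup [set sum_norm N (p0 - z) | z in W].
  split; first by exists (sum_norm N (p0 - p)), p.
  by exists 2 => r [z Wz <-]; apply: ub.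
apply/eqP; rewrite eq_le; apply/andP; split.
  by apply: ge_sup; [exists (sum_norm N (p0 - p)), p | move=> r [z Wz <-]; apply: ub].
rewrite leNgt; apply/negP => hlt.
set sS := sup _ in hlt.
have d0 : 0 < (2 - sS) / 4 by rewrite divr_gt0 // subr_gt0.
have [z [Wz hz]] := key _ d0.
have : sum_norm N (p0 - z) <= sS.
  by apply: sup_upper_bound => //; exists z.
lra.
Qed.
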